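(* Let $T_R:\mathbb{Z}\to\mathbb{Z}$ be defined by $T_R(n)=3n/4$ if $n\equiv 0\pmod 4$, $T_R(n)=(n-2)/4$ if $n\equiv 2\pmod 4$, and $T_R(n)=(3n+1)/2$ if $n$ is odd. Define $T_R^*:\mathbb{Z}\to\mathbb{Z}$ by $T_R^*(n)=T_R(n)$ if $n\equiv 1\pmod 2$ or $n\equiv 0\pmod 4$; $T_R^*(n)=T_R^2(n)$ if $n\equiv 6\pmod 8$ or $n\equiv 2\pmod{16}$; and $T_R^*(n)=T_R^3(n)$ if $n\equiv 26\pmod{32}$, $n\equiv 10\pmod{64}$ or $n\equiv 42\pmod{64}$. Then for every integer $n$, the $T_R^*$-trajectory $((T_R^* )^k(n))_{k\ge0}$ consists of finitely many numbers congruent to $1\pmod 3$ followed only by numbers congruent to $0$ or $2\pmod 3$; that is, there is $K\ge 0$ with $(T_R^* )^k(n)\equiv 1\pmod 3$ for $0\le k<K$ and $(T_R^* )^k(n)\not\equiv 1\pmod 3$ for all $k\ge K$.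
   Context: $T_R^k$ and $(T_R^* )^k$ denote $k$-fold iterates, with the $0$-th iterate the identity. *)

(* Defs.v *)
From Stdlib Require Import ZArith Bool.
Open Scope bool_scope.
Open Scope Z_scope.

(* T_R(n) = 3n/4 if n = 0 mod 4; (n-2)/4 if n = 2 mod 4; (3n+1)/2 if n odd.
   All divisions are exact in their respective cases. *)
Definition TR (n : Z) : Z :=
  if n mod 4 =? 0 then 3 * n / 4
  else if n mod 4 =? 2 then (n - 2) / 4
  else (3 * n + 1) / 2.

Definition iterZ (k : nat) (f : Z -> Z) (n : Z) : Z := Nat.iter k f n.

Definition TRstar (n : Z) : Z :=
  if (n mod 2 =? 1) || (n mod 4 =? 0) then TR n
  else if (n mod 8 =? 6) || (n mod 16 =? 2) then iterZ 2 TR n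
  else if (n mod 32 =? 26) || (n mod 64 =? 10) || (n mod 64 =? 42) then iterZ 3 TR n
  else n. (* unreachable: the cases above cover all integers *)

(* Main.v *)
Require Import Defs.
From Stdlib Require Import ZArith Lia Bool.
Open Scope Z_scope.

Ltac split_ifs :=
  repeat match goal with
  | |- context [if ?b then _ else _] =>
      lazymatch b with context [if _ then _ else _] => fail | _ => idtac end;
      let H := fresh "E" in destruct b eqn:H
  end;
  repeat match goal with
  | H : (_ || _) = true |- _ => apply orb_true_iff in H; destruct H as [H|H]
  | H : (_ || _) = false |- _ => apply orb_false_iff in H; destruct H
  | H : (_ =? _) = true |- _ => apply Z.eqb_eq in H
  | H : (_ =? _) = false |- _ => apply Z.eqb_neq in H
  end.

Lemma TR_0 n : n mod 4 = 0 -> TR n = 3*n/4.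
Proof. intros H; unfold TR; rewrite H; reflexivity. Qed.
Lemma TR_2 n : n mod 4 = 2 -> TR n = (n-2)/4.
Proof. intros H; unfold TR; rewrite H; reflexivity. Qed.
Ltac zl := Z.div_mod_to_equations; lia.
Lemma TR_odd n : n mod 2 = 1 -> TR n = (3*n+1)/2.
Proof. intros H; unfold TR. split_ifs; zl. Qed.

Ltac stepTR := match goal with |- context [TR ?x] =>
  lazymatch x with context[TR _] => fail | _ => idtac end;
  first [rewrite (TR_0 x) by zl | rewrite (TR_2 x) by zl | rewrite (TR_odd x) by zl] end.

Ltac solveT := unfold TRstar, iterZ; simpl; split_ifs; try zl; repeat stepTR; zl.

Lemma L1 n : n mod 64 = 42 -> TRstar n = (n-42)/64.
Proof. intros H. solveT. Qed.

Lemma L2 n : n mod 64 <> 42 -> TRstar n mod 3 <> 1.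
Proof. intros H. solveT. Qed.

Lemma L3 n : n mod 3 <> 1 -> TRstar n mod 3 <> 1.
Proof.
  intros H. destruct (Z.eq_dec (n mod 64) 42) as [E|E].
  - rewrite L1 by exact E. zl.
  - now apply L2.
Qed.

Lemma inv n : n mod 3 <> 1 -> forall k, iterZ k TRstar n mod 3 <> 1.
Proof.
  intros H k; induction k as [|k IH]; [exact H|].
  unfold iterZ in *; simpl. now apply L3.
Qed.

Lemma iter_S k n : iterZ (S k) TRstar n = iterZ k TRstar (TRstar n).
Proof. unfold iterZ. apply Nat.iter_succ_r. Qed.

Theorem theorem3 : forall n : Z, exists K : nat,
  (forall k : nat, (k < K)%nat -> iterZ k TRstar n mod 3 = 1) /\
  (forall k : nat, (K <= k)%nat -> iterZ k TRstar n mod 3 <> 1).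
Proof.
  intros n. remember (Z.abs_nat n) as m eqn:Hm. revert n Hm.
  induction m as [m IH] using (well_founded_induction lt_wf).
  intros n Hm.
  destruct (Z.eq_dec (n mod 3) 1) as [H3|H3].
  2:{ exists 0%nat. split; [intros; lia|]. intros k _. now apply inv. }
  destruct (Z.eq_dec (n mod 64) 42) as [E|E].
  - assert (Hlt : (Z.abs_nat (TRstar n) < m)%nat).
    { rewrite L1 by exact E. subst m. apply Nat2Z.inj_lt. rewrite !Nat2Z.inj_abs_nat. zl. }
    destruct (IH _ Hlt (TRstar n) eq_refl) as [K [HA HB]].
    exists (S K). split.
    + intros [|k] Hk; [exact H3|]. rewrite iter_S. apply HA. lia.
    + intros [|k] Hk; [lia|]. rewrite iter_S. apply HB. lia.
  - exists 1%nat. split.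
    + intros k Hk. assert (k = 0%nat) by lia. subst. exact H3.
    + intros [|k] Hk; [lia|]. rewrite iter_S. apply inv. now apply L2.
Qed.
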